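(* The special monoid $\Pi_2=\langle a,b,c\mid (ab^ic)^2=1\ (i\geq 1)\rangle$ has context-free word problem, and none of its maximal subgroups is finitely generated.
   Context: For a monoid $M$ with finite generating set $A$, the word problem of $M$ with respect to $A$ is the language $\{u\#v^{\mathrm{rev}} \mid u,v\in A^\ast,\ u=_M v\}$, where $\#\notin A$ and $v^{\mathrm{rev}}$ is the reversal of $v$; $M$ has context-free word problem if this language is context-free. For an idempotent $e$ of $M$, the maximal subgroup of $M$ containing $e$ is the group of units of $eMe$. *)

(* Defs.v *)
From Stdlib Require List.
From mathcomp Require Import all_boot.
Unset Printing Implicit Defensive.

(* The monoid congruence on A^* generated by a set R of defining relations
   (l, r) (meaning l = r).  The presented monoid <A | R> is A^* / cong R. *)
Inductive cong {A : Type} (R : seq A -> seq A -> Prop) : seq A -> seq A -> Prop :=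
| cong_rel u v l r : R l r -> cong R (u ++ l ++ v) (u ++ r ++ v)
| cong_refl w : cong R w w
| cong_sym w1 w2 : cong R w1 w2 -> cong R w2 w1
| cong_trans w1 w2 w3 : cong R w1 w2 -> cong R w2 w3 -> cong R w1 w3.

Definition is_idempotent {A : Type} (R : seq A -> seq A -> Prop) (e : seq A) : Prop :=
  cong R (e ++ e) e.

Definition in_eMe {A : Type} (R : seq A -> seq A -> Prop) (e x : seq A) : Prop :=
  exists y, cong R x (e ++ y ++ e).

Definition eMe_inverse {A : Type} (R : seq A -> seq A -> Prop) (e x y : seq A) : Prop :=
  in_eMe R e y /\ cong R (x ++ y) e /\ cong R (y ++ x) e.

(* x lies in the maximal subgroup H_e = group of units of eMe. *)
Definition in_maxsub {A : Type} (R : seq A -> seq A -> Prop) (e x : seq A) : Prop :=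
  in_eMe R e x /\ exists y, eMe_inverse R e x y.

(* H_e is finitely generated (as a group): there is a finite list gs of
   elements of H_e such that every element of H_e is a (possibly empty)
   product, in eMe, of elements of gs and their inverses; the empty product
   is the identity e of H_e. *)
Definition maxsub_fg {A : Type} (R : seq A -> seq A -> Prop) (e : seq A) : Prop :=
  exists gs : seq (seq A),
    (forall g, List.In g gs -> in_maxsub R e g) /\
    forall x, in_maxsub R e x ->
      exists ws : seq (seq A),
        (forall w, List.In w ws ->
           List.In w gs \/ exists g, List.In g gs /\ eMe_inverse R e g w) /\
        cong R x (e ++ flatten ws).

Record cfg (T : finType) := CFG {
  cfg_N : finType;
  cfg_rules : seq (cfg_N * seq (cfg_N + T));
  cfg_start : cfg_N }.
Arguments cfg_N {T}. Arguments cfg_rules {T}. Arguments cfg_start {T}.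

Definition cfg_step {T : finType} (G : cfg T) (s1 s2 : seq (cfg_N G + T)) : Prop :=
  exists u v (X : cfg_N G) rhs,
    (X, rhs) \in cfg_rules G /\ s1 = u ++ inl X :: v /\ s2 = u ++ rhs ++ v.

Inductive derives {T : finType} (G : cfg T) : seq (cfg_N G + T) -> seq (cfg_N G + T) -> Prop :=
| derives_refl s : derives G s s
| derives_step s1 s2 s3 : cfg_step G s1 s2 -> derives G s2 s3 -> derives G s1 s3.

Definition cfg_lang {T : finType} (G : cfg T) (w : seq T) : Prop :=
  derives G [:: inl (cfg_start G)] (map inr w).

Definition context_free {T : finType} (L : seq T -> Prop) : Prop :=
  exists G : cfg T, forall w, L w <-> cfg_lang G w.

(* Over the alphabet option A, [Some x] is the letter x and [None] is #. *)
Definition word_problem {A : finType} (R : seq A -> seq A -> Prop) (w : seq (option A)) : Prop :=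
  exists u v : seq A, cong R u v /\ w = map Some u ++ None :: map Some (rev v).

Definition la : 'I_3 := @Ordinal 3 0 isT.
Definition lb : 'I_3 := @Ordinal 3 1 isT.
Definition lc : 'I_3 := @Ordinal 3 2 isT.

Definition Pi2_rel (l r : seq 'I_3) : Prop :=
  exists i : nat, 1 <= i /\
    l = (la :: nseq i lb ++ [:: lc]) ++ (la :: nseq i lb ++ [:: lc]) /\ r = [::].

(* Main.v *)
Require Import Defs.
From mathcomp Require Import all_boot.
From Stdlib Require Import Setoid Morphisms Lia.
From mathcomp Require Import zify.


Notation C := (cong Pi2_rel).

Lemma cong_ctx (u v x y : seq 'I_3) : C u v -> C (x ++ u ++ y) (x ++ v ++ y).
Proof.
elim=> [u' v' l r H|w|w1 w2 _ IH|w1 w2 w3 _ IH1 _ IH2].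
- have := @cong_rel _ Pi2_rel (x ++ u') (v' ++ y) l r H. by rewrite -!catA.
- exact: cong_refl.
- exact: cong_sym.
- exact: cong_trans IH2.
Qed.

#[export] Instance C_equiv : Equivalence C.
Proof. split; [exact: cong_refl|exact: cong_sym|exact: cong_trans]. Qed.

#[export] Instance cat_proper : Proper (C ==> C ==> C) (@cat 'I_3).
Proof.
move=> u u' Hu v v' Hv.
apply: (@cong_trans _ _ _ (u' ++ v)).
- have := @cong_ctx u u' [::] v Hu. by [].
- have := @cong_ctx v v' u' [::] Hv. by rewrite !cats0.
Qed.

#[export] Instance cons_proper x : Proper (C ==> C) (cons x).
Proof. move=> u u' Hu. exact: (cat_proper _ _ (@cong_refl _ Pi2_rel [:: x]) _ _ Hu). Qed.

Definition xw (i : nat) : seq 'I_3 := la :: nseq i lb ++ [:: lc].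
Definition rxw (i : nat) : seq 'I_3 := lc :: nseq i lb ++ [:: la].

Lemma rev_rxw i : rev (rxw i) = xw i.
Proof. by rewrite /rxw rev_cons rev_cat rev_nseq /= -cats1. Qed.

Lemma rel_C i : 0 < i -> C (xw i ++ xw i) [::].
Proof.
move=> Hi. have := @cong_rel _ Pi2_rel [::] [::] (xw i ++ xw i) [::].
rewrite /= !cats0. apply. by exists i.
Qed.

Lemma nseqSr (n : nat) (x : 'I_3) : nseq n.+1 x = nseq n x ++ [:: x].
Proof. by elim: n => //= n ->. Qed.

Fixpoint bs (s : seq 'I_3) : nat * seq 'I_3 :=
  if s is x :: s' then
    (if x == lb then let: (n, r) := bs s' in (n.+1, r) else (0, s))
  else (0, [::]).

Lemma bsE s : let: (n, r) := bs s in s = nseq n lb ++ r.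
Proof.
elim: s => //= x s. case: (bs s) => n r IH.
case: eqP => [->|_] //=. by rewrite IH.
Qed.

Lemma bs_nseq i x s : x != lb -> bs (nseq i lb ++ x :: s) = (i, x :: s).
Proof. move=> Hx. elim: i => /= [|i ->]; first by rewrite (negbTE Hx). by []. Qed.

Definition popx (st : seq 'I_3) : option (nat * seq 'I_3) :=
  if st is x :: s1 then
    if x == lc then
      let: (n, s2) := bs s1 in
      if s2 is y :: s3 then (if (y == la) && (0 < n) then Some (n, s3) else None) else None
    else None
  else None.

Lemma popx_rxw i s : 0 < i -> popx (rxw i ++ s) = Some (i, s).
Proof. move=> Hi. by rewrite /rxw /= -catA /= bs_nseq //= Hi. Qed.

Lemma popxP st n s : popx st = Some (n, s) -> st = rxw n ++ s /\ 0 < n.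
Proof.
case: st => [|x s1] //=. case: eqP => // ->.
move: (bsE s1); case: (bs s1) => n' [|y s3] // ->.
case: ifP => // /andP[/eqP -> Hn] [<- <-]. by rewrite /rxw -catA.
Qed.

Definition red (st : seq 'I_3) : option (seq 'I_3) :=
  if popx st is Some (n, s3) then
    (if popx s3 is Some (m, s4) then (if n == m then Some s4 else None) else None)
  else None.

Lemma red_rxw i s : 0 < i -> red (rxw i ++ rxw i ++ s) = Some s.
Proof. move=> Hi. by rewrite /red popx_rxw // popx_rxw // eqxx. Qed.

Lemma red_rxw_cat i s : 0 < i -> red (rxw i ++ s) =
  if popx s is Some (m, s4) then (if i == m then Some s4 else None) else None.
Proof. move=> Hi. by rewrite /red popx_rxw. Qed.

Lemma redP st s : red st = Some s -> exists i, 0 < i /\ st = rxw i ++ rxw i ++ s.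
Proof.
rewrite /red. case E1: (popx st) => [[n s3]|] //. case E2: (popx s3) => [[m s4]|] //.
case: eqP => // Enm [Es]. subst m s4. move/popxP: E1 => [-> Hn]. move/popxP: E2 => [-> _].
by exists n.
Qed.

Lemma red_cat st s t : red st = Some s -> red (st ++ t) = Some (s ++ t).
Proof. move/redP=> [i [Hi ->]]. by rewrite -!catA red_rxw. Qed.

Definition step (st : seq 'I_3) (l : 'I_3) :=
  if red (l :: st) is Some s then s else l :: st.
Definition nfs st (w : seq 'I_3) := foldl step st w.

Lemma nfs_cat st u v : nfs st (u ++ v) = nfs (nfs st u) v.
Proof. exact: foldl_cat. Qed.

Lemma red_nlc st l : l != lc -> red (l :: st) = None.
Proof. move=> H. by rewrite /red /= (negbTE H). Qed.

Lemma nfs_nolc st w : lc \notin w -> nfs st w = rev w ++ st.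
Proof.
elim: w st => //= l w IH st. rewrite in_cons negb_or => /andP[Hl Hw].
rewrite /step red_nlc; last by rewrite eq_sym.
by rewrite IH // rev_cons cat_rcons.
Qed.

Lemma lc_notin i : lc \notin la :: nseq i lb.
Proof. by elim: i. Qed.

Lemma nfs_xw st i : 0 < i -> nfs st (xw i) =
  if red (rxw i ++ st) is Some s then s else rxw i ++ st.
Proof.
move=> Hi. rewrite /xw -cat_cons nfs_cat (@nfs_nolc st _ (lc_notin i)).
by rewrite /= /step rev_cons rev_nseq /rxw -cats1 -catA.
Qed.

Definition irr st := forall k, red (drop k st) = None.

Lemma irr_step st l : irr st -> irr (step st l).
Proof.
move=> H. rewrite /step. case E: (red (l :: st)) => [s|]; last first.
  by case=> [|k] //=; rewrite drop0.
move/redP: E => [i [Hi Est]] k.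
have -> : s = drop (size (rxw i ++ rxw i)) (l :: st) by rewrite Est catA drop_size_cat.
rewrite drop_drop size_cat /rxw /= addSn addnS /=. exact: H.
Qed.

Lemma irr_nfs st w : irr st -> irr (nfs st w).
Proof. elim: w st => //= l w IH st H. apply: IH. exact: irr_step. Qed.

Lemma irr_nil : irr [::].
Proof. by case. Qed.

Lemma nfs_rel st i : irr st -> 0 < i -> nfs (nfs st (xw i)) (xw i) = st.
Proof.
move=> Hirr Hi. rewrite (@nfs_xw st i Hi) red_rxw_cat //.
case Hp: (popx st) => [[m s4]|]; last by rewrite nfs_xw // red_rxw.
case: eqP => [Em|_]; last by rewrite nfs_xw // red_rxw.
subst m. move/popxP: Hp => [Est _]. rewrite nfs_xw // red_rxw_cat //.
case Hp2: (popx s4) => [[m' s5]|]; last by rewrite Est.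
case: eqP => [Em|_]; last by rewrite Est.
subst m'. move/popxP: Hp2 => [Es4 _]. have := Hirr 0.
by rewrite drop0 Est Es4 red_rxw.
Qed.

Lemma nfs_cong u v : C u v -> nfs [::] u = nfs [::] v.
Proof.
elim=> [u' v' l r [i [Hi [-> ->]]]|w|w1 w2 _ IH|w1 w2 w3 _ IH1 _ IH2] //.
- rewrite cat0s -/(xw i) !nfs_cat nfs_rel //. exact: irr_nfs irr_nil.
- by rewrite IH1.
Qed.

Lemma step_C st l : C (rev (l :: st)) (rev (step st l)).
Proof.
rewrite /step. case E: (red (l :: st)) => [s|]; last reflexivity.
move/redP: E => [i [Hi ->]]. rewrite !rev_cat !rev_rxw -catA rel_C //. rewrite cats0; reflexivity.
Qed.

Lemma cong_nf st w : C (rev st ++ w) (rev (nfs st w)).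
Proof.
elim: w st => [|l w IH] st /=; first (rewrite cats0; reflexivity).
rewrite -(IH (step st l)). rewrite -cat1s catA cats1 -rev_cons. rewrite step_C; reflexivity.
Qed.

Lemma C_nf u : C u (rev (nfs [::] u)).
Proof. exact: cong_nf [::] u. Qed.

Lemma C_iff u v : C u v <-> nfs [::] u = nfs [::] v.
Proof.
split; first exact: nfs_cong.
move=> H. rewrite (C_nf u) (C_nf v) H; reflexivity.
Qed.


Ltac catn := repeat (rewrite -catA || rewrite cat_cons).

Inductive Ew : seq 'I_3 -> Prop :=
| E_nil : Ew [::]
| E_cat u v : Ew u -> Ew v -> Ew (u ++ v)
| E_red u v : Ew u -> Nw v -> Ew (la :: u ++ v ++ [:: lc])
with Nw : seq 'I_3 -> Prop :=
| N_base e1 e2 e3 e4 : Ew e1 -> Ew e2 -> Ew e3 -> Ew e4 ->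
    Nw (lb :: e1 ++ lc :: e2 ++ la :: e3 ++ lb :: e4)
| N_step e1 n e2 : Ew e1 -> Nw n -> Ew e2 -> Nw (lb :: e1 ++ n ++ lb :: e2).

Scheme Ew_mut := Induction for Ew Sort Prop
with Nw_mut := Induction for Nw Sort Prop.
Combined Scheme EN_mut from Ew_mut, Nw_mut.

Lemma EN_C : (forall t, Ew t -> C t [::]) /\
  (forall v, Nw v -> exists i, 0 < i /\ C v (nseq i lb ++ lc :: la :: nseq i lb)).
Proof.
apply: EN_mut.
- reflexivity.
- move=> u v _ Hu _ Hv. rewrite Hu Hv. reflexivity.
- move=> u v _ Hu _ [i [Hi Hv]]. rewrite Hu Hv /=.
  have -> : la :: (nseq i lb ++ lc :: la :: nseq i lb) ++ [:: lc] = xw i ++ xw i.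
    by rewrite /xw /= -!catA.
  exact: rel_C.
- move=> e1 e2 e3 e4 _ H1 _ H2 _ H3 _ H4. exists 1; split => //.
  rewrite H1 H2 H3 H4. reflexivity.
- move=> e1 n e2 _ H1 _ [i [Hi Hn]] _ H2. exists i.+1; split => //.
  rewrite H1 Hn H2 /=. have E : lb :: nseq i lb = nseq i lb ++ [:: lb] := nseqSr i lb.
  rewrite E -!catA. reflexivity.
Qed.

Inductive D : seq 'I_3 -> seq 'I_3 -> Prop :=
| D_nil t : Ew t -> D t [::]
| D_cons t x u w : Ew t -> D u w -> D (t ++ x :: u) (x :: w).

Lemma D_C u w : D u w -> C u w.
Proof.
elim=> [t Ht|t x u' w' Ht _ IH]; first exact: EN_C.1.
rewrite (EN_C.1 _ Ht) IH. reflexivity.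
Qed.

Lemma D_nilP u : D u [::] -> Ew u.
Proof. move=> H. by inversion H. Qed.

Lemma D_consP u x w : D u (x :: w) -> exists t u', Ew t /\ D u' w /\ u = t ++ x :: u'.
Proof. move=> H. inversion H; subst. by exists t, u0. Qed.

Lemma D_split u w v : D u (w ++ v) -> exists u1 u2, u = u1 ++ u2 /\ D u1 w /\ D u2 v.
Proof.
elim: w u => [|x w IH] u /=.
  move=> H. exists [::], u. split => //. split => //. apply: D_nil. exact: E_nil.
move/D_consP=> [t [u' [Ht [Hu' ->]]]]. have [u1 [u2 [-> [H1 H2]]]] := IH _ Hu'.
exists (t ++ x :: u1), u2. split; first by rewrite -catA.
split => //. exact: D_cons.
Qed.

Lemma Nw_app v t : Nw v -> Ew t -> Nw (v ++ t).
Proof.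
case=> [e1 e2 e3 e4 H1 H2 H3 H4|e1 n e2 H1 H2 H3] Ht; catn.
- apply: N_base => //. exact: E_cat.
- apply: N_step => //. exact: E_cat.
Qed.

Lemma D_W n u : D u (nseq n.+1 lb ++ lc :: la :: nseq n.+1 lb) ->
  exists t v, Ew t /\ Nw v /\ u = t ++ v.
Proof.
elim: n u => [|n IH] u.
  move=> /= /D_consP [t [u1 [Ht [H1 ->]]]].
  move: H1 => /D_consP [t1 [u2 [Ht1 [H2 ->]]]].
  move: H2 => /D_consP [t2 [u3 [Ht2 [H3 ->]]]].
  move: H3 => /D_consP [t3 [u4 [Ht3 [H4 ->]]]].
  move/D_nilP: H4 => Hu4.
  exists t, (lb :: t1 ++ lc :: t2 ++ la :: t3 ++ lb :: u4). split => //. split => //.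
  exact: N_base.
have -> : nseq n.+2 lb ++ lc :: la :: nseq n.+2 lb =
  lb :: (nseq n.+1 lb ++ lc :: la :: nseq n.+1 lb) ++ [:: lb].
  by rewrite {2}(nseqSr n.+1); catn.
move/D_consP=> [t [u1 [Ht [H1 ->]]]].
have [v1 [v2 [-> [Hv1 Hv2]]]] := @D_split _ _ _ H1.
have [t' [v' [Ht' [Hv' ->]]]] := IH _ Hv1.
move: Hv2 => /D_consP [t'' [u3 [Ht'' [H3 ->]]]]. move/D_nilP: H3 => Hu3.
exists t, (lb :: t' ++ (v' ++ t'') ++ lb :: u3). split => //. split.
  apply: N_step => //. exact: Nw_app.
by rewrite -!catA.
Qed.

Lemma D_rel n u : 0 < n -> D u (xw n ++ xw n) -> Ew u.
Proof.
case: n => [//|m] _.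
have -> : xw m.+1 ++ xw m.+1 = la :: (nseq m.+1 lb ++ lc :: la :: nseq m.+1 lb) ++ [:: lc].
  by rewrite /xw /= -!catA.
move/D_consP=> [t0 [u1 [Ht0 [H1 ->]]]].
have [v1 [v2 [-> [Hv1 Hv2]]]] := @D_split _ _ _ H1.
have [t [v [Ht [Hv ->]]]] := @D_W _ _ Hv1.
move: Hv2 => /D_consP [t'' [u3 [Ht'' [H3 ->]]]]. move/D_nilP: H3 => Hu3.
have -> : t0 ++ la :: ((t ++ v) ++ t'' ++ lc :: u3) =
  t0 ++ (la :: t ++ (v ++ t'') ++ [:: lc]) ++ u3 by rewrite /= -!catA.
apply: E_cat => //. apply: E_cat => //. apply: E_red => //. exact: Nw_app.
Qed.

Lemma D_appE u w t : D u w -> Ew t -> D (u ++ t) w.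
Proof.
elim=> [t' Ht'|t' x u' w' Ht' _ IH] Ht.
- apply: D_nil. exact: E_cat.
- rewrite -catA /=. apply: D_cons => //. exact: IH.
Qed.

Lemma D_red u w n : 0 < n -> D u (w ++ xw n ++ xw n) -> D u w.
Proof.
move=> Hn /D_split [u1 [u2 [-> [H1 H2]]]]. apply: D_appE => //. exact: D_rel H2.
Qed.

Lemma D_snoc u w l : D u w -> D (u ++ [:: l]) (w ++ [:: l]).
Proof.
elim=> [t Ht|t x u' w' Ht _ IH].
- rewrite /=. apply: D_cons => //. apply: D_nil. exact: E_nil.
- rewrite -catA /=. exact: D_cons.
Qed.

Lemma D_nfs st p w : D p (rev st) -> D (p ++ w) (rev (nfs st w)).
Proof.
elim: w st p => [|l w IH] st p H /=; first by rewrite cats0.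
rewrite -cat1s catA. apply: IH.
have H2 := @D_snoc _ _ l H. rewrite /step. case E: (red (l :: st)) => [s|]; last first.
  by rewrite rev_cons -cats1.
move/redP: E => [i [Hi Est]]. apply: (@D_red _ _ _ Hi).
have -> : rev s ++ xw i ++ xw i = rev st ++ [:: l] by rewrite cats1 -rev_cons Est !rev_cat !rev_rxw catA.
exact: H2.
Qed.

Lemma D_nf u : D u (rev (nfs [::] u)).
Proof. apply: (@D_nfs [::] [::] u). apply: D_nil. exact: E_nil. Qed.

Definition SL (w : seq (option 'I_3)) : Prop :=
  exists u v wd, D u wd /\ D v wd /\ w = map Some u ++ None :: map Some (rev v).

Lemma wp_SL w : word_problem Pi2_rel w <-> SL w.
Proof.
split.
- move=> [u [v [Huv ->]]]. exists u, v, (rev (nfs [::] u)). split; first exact: D_nf.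
  rewrite (@nfs_cong _ _ Huv). split => //. exact: D_nf.
- move=> [u [v [wd [Hu [Hv ->]]]]]. exists u, v. split => //.
  rewrite (@D_C _ _ Hu) (@D_C _ _ Hv). reflexivity.
Qed.


Ltac norm := repeat progress (rewrite ?cats0 ?map_cat ?rev_cat ?rev_cons ?map_rcons -?cats1 /=); catn.
Ltac dest := repeat match goal with
  | H : exists _, _ |- _ => destruct H
  | H : _ /\ _ |- _ => destruct H
  end; subst.

Definition TT := option 'I_3.
Definition sym := ('I_6 + TT)%type.
Definition nS : 'I_6 := @Ordinal 6 0 isT.
Definition nQ : 'I_6 := @Ordinal 6 1 isT.
Definition nE : 'I_6 := @Ordinal 6 2 isT.
Definition nN : 'I_6 := @Ordinal 6 3 isT.
Definition nF : 'I_6 := @Ordinal 6 4 isT.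
Definition nM : 'I_6 := @Ordinal 6 5 isT.
Notation nt X := (@inl 'I_6 TT X).
Notation tl x := (@inr 'I_6 TT (Some x)).
Notation tA := (tl la).
Notation tB := (tl lb).
Notation tC := (tl lc).
Notation tH := (@inr 'I_6 TT None).

Definition rules : seq ('I_6 * seq sym) :=
  [:: (nS, [:: nt nE; nt nQ; nt nF]);
      (nQ, [:: tH]);
      (nQ, [:: tA; nt nS; tA]);
      (nQ, [:: tB; nt nS; tB]);
      (nQ, [:: tC; nt nS; tC]);
      (nE, [::]);
      (nE, [:: nt nE; nt nE]);
      (nE, [:: tA; nt nE; nt nN; tC]);
      (nN, [:: tB; nt nE; tC; nt nE; tA; nt nE; tB; nt nE]);
      (nN, [:: tB; nt nE; nt nN; tB; nt nE]);
      (nF, [::]);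
      (nF, [:: nt nF; nt nF]);
      (nF, [:: tC; nt nM; nt nF; tA]);
      (nM, [:: nt nF; tB; nt nF; tA; nt nF; tC; nt nF; tB]);
      (nM, [:: nt nF; tB; nt nM; nt nF; tB])].

Definition G : cfg TT := @CFG TT 'I_6 rules nS.

Definition LangN (X : 'I_6) (w : seq TT) : Prop :=
  match nat_of_ord X with
  | 0 => SL w
  | 1 => w = [:: None] \/ exists x w', SL w' /\ w = Some x :: w' ++ [:: Some x]
  | 2 => exists t, Ew t /\ w = map Some t
  | 3 => exists t, Nw t /\ w = map Some t
  | 4 => exists t, Ew t /\ w = map Some (rev t)
  | _ => exists t, Nw t /\ w = map Some (rev t)
  end.

Fixpoint SF (s : seq sym) (w : seq TT) : Prop :=
  match s with
  | [::] => w = [::]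
  | inl X :: s' => exists w1 w2, w = w1 ++ w2 /\ LangN X w1 /\ SF s' w2
  | inr t :: s' => exists w2, w = t :: w2 /\ SF s' w2
  end.

Lemma SF_cat s1 s2 w : SF (s1 ++ s2) w <-> exists w1 w2, w = w1 ++ w2 /\ SF s1 w1 /\ SF s2 w2.
Proof.
elim: s1 w => [|[X|t] s1 IH] w /=.
- split; first by move=> H; exists [::], w.
  by move=> [w1 [w2 [-> [-> H]]]].
- split.
  + move=> [w1 [w2 [-> [HX /IH [w3 [w4 [-> [H3 H4]]]]]]]].
    exists (w1 ++ w3), w4. split; first by rewrite catA. split => //. by exists w1, w3.
  + move=> [w1 [w2 [-> [[w3 [w4 [-> [HX H]]]] H2]]]].
    exists w3, (w4 ++ w2). split; first by rewrite catA. split => //. apply/IH. by exists w4, w2.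
- split.
  + move=> [w2 [-> /IH [w3 [w4 [-> [H3 H4]]]]]].
    exists (t :: w3), w4. split => //. split => //. by exists w3.
  + move=> [w1 [w2 [-> [[w3 [-> H]] H2]]]].
    exists (w3 ++ w2). split => //. apply/IH. by exists w3, w2.
Qed.

Lemma SF_map w : SF (map inr w) w.
Proof. elim: w => //= t w IH. by exists w. Qed.

Lemma inP_list (T : eqType) (x : T) s : x \in s -> List.In x s.
Proof.
elim: s => //= y s IH. rewrite in_cons => /orP [/eqP ->|/IH]; auto.
Qed.


Lemma LS_rule x y z : LangN nE x -> LangN nQ y -> LangN nF z -> LangN nS (x ++ y ++ z ++ [::]).
Proof.
rewrite /LangN /= => [[t [Ht ->]]] Hy [s [Hs ->]].
case: Hy => [->|[xx [ww [[u [v [wd [Hu [Hv ->]]]]] ->]]]].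
- exists t, s, [::]. split; first exact: D_nil. split; first exact: D_nil. by norm.
- exists (t ++ xx :: u), (s ++ xx :: v), (xx :: wd).
  split; first exact: D_cons. split; first exact: D_cons. by norm.
Qed.

Lemma LQ_hash : LangN nQ [:: None].
Proof. by left. Qed.

Lemma LQ_x x w : LangN nS w -> LangN nQ (Some x :: w ++ [:: Some x]).
Proof. move=> H. right. by exists x, w. Qed.

Lemma LE_nil : LangN nE [::].
Proof. exists [::]. split => //. exact: E_nil. Qed.

Lemma LE_cat x y : LangN nE x -> LangN nE y -> LangN nE (x ++ y ++ [::]).
Proof.
rewrite /LangN /= => [[t [Ht ->]]] [s [Hs ->]]. exists (t ++ s).
split; first exact: E_cat. by norm.
Qed.

Lemma LE_red x y : LangN nE x -> LangN nN y -> LangN nE (Some la :: x ++ y ++ [:: Some lc]).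
Proof.
rewrite /LangN /= => [[t [Ht ->]]] [s [Hs ->]]. exists (la :: t ++ s ++ [:: lc]).
split; first exact: E_red. by norm.
Qed.

Lemma LN_base x0 x3 x6 x9 : LangN nE x0 -> LangN nE x3 -> LangN nE x6 -> LangN nE x9 ->
  LangN nN (Some lb :: x0 ++ Some lc :: x3 ++ Some la :: x6 ++ Some lb :: x9 ++ [::]).
Proof.
rewrite /LangN /= => [[t0 [H0 ->]]] [t3 [H3 ->]] [t6 [H6 ->]] [t9 [H9 ->]].
exists (lb :: t0 ++ lc :: t3 ++ la :: t6 ++ lb :: t9).
split; first exact: N_base. by norm.
Qed.

Lemma LN_step x0 x2 x5 : LangN nE x0 -> LangN nN x2 -> LangN nE x5 ->
  LangN nN (Some lb :: x0 ++ x2 ++ Some lb :: x5 ++ [::]).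
Proof.
rewrite /LangN /= => [[t0 [H0 ->]]] [t2 [H2 ->]] [t5 [H5 ->]].
exists (lb :: t0 ++ t2 ++ lb :: t5).
split; first exact: N_step. by norm.
Qed.

Lemma LF_nil : LangN nF [::].
Proof. exists [::]. split => //. exact: E_nil. Qed.

Lemma LF_cat x y : LangN nF x -> LangN nF y -> LangN nF (x ++ y ++ [::]).
Proof.
rewrite /LangN /= => [[t [Ht ->]]] [s [Hs ->]]. exists (s ++ t).
split; first exact: E_cat. by norm.
Qed.

Lemma LF_red x y : LangN nM x -> LangN nF y -> LangN nF (Some lc :: x ++ y ++ [:: Some la]).
Proof.
rewrite /LangN /= => [[t [Ht ->]]] [s [Hs ->]]. exists (la :: s ++ t ++ [:: lc]).
split; first exact: E_red. by norm.
Qed.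

Lemma LM_base x x2 x5 x8 : LangN nF x -> LangN nF x2 -> LangN nF x5 -> LangN nF x8 ->
  LangN nM (x ++ Some lb :: x2 ++ Some la :: x5 ++ Some lc :: x8 ++ [:: Some lb]).
Proof.
rewrite /LangN /= => [[t0 [H0 ->]]] [t3 [H3 ->]] [t6 [H6 ->]] [t9 [H9 ->]].
exists (lb :: t9 ++ lc :: t6 ++ la :: t3 ++ lb :: t0).
split; first exact: N_base. by norm.
Qed.

Lemma LM_step x x2 x4 : LangN nF x -> LangN nM x2 -> LangN nF x4 ->
  LangN nM (x ++ Some lb :: x2 ++ x4 ++ [:: Some lb]).
Proof.
rewrite /LangN /= => [[t0 [H0 ->]]] [t2 [H2 ->]] [t5 [H5 ->]].
exists (lb :: t5 ++ t2 ++ lb :: t0).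
split; first exact: N_step. by norm.
Qed.

Lemma rules_sound X rhs : (X, rhs) \in rules -> forall w, SF rhs w -> LangN X w.
Proof.
move/inP_list => H w Hw. rewrite /rules /= in H.
repeat (destruct H as [H|H]; [injection H as <- <-; simpl in Hw; dest|]); last by [].
- exact: LS_rule.
- exact: LQ_hash.
- exact: LQ_x.
- exact: LQ_x.
- exact: LQ_x.
- exact: LE_nil.
- exact: LE_cat.
- exact: LE_red.
- exact: LN_base.
- exact: LN_step.
- exact: LF_nil.
- exact: LF_cat.
- exact: LF_red.
- exact: LM_base.
- exact: LM_step.
Qed.

Lemma derives_sound s1 s2 : derives G s1 s2 -> forall w, SF s2 w -> SF s1 w.
Proof.
elim=> [s|t1 t2 t3 [u [v [X [rhs [Hin [-> ->]]]]]] _ IH] w //.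
move/IH => /SF_cat [w1 [w2 [-> [Hu /SF_cat [w3 [w4 [-> [Hr Hv]]]]]]]].
apply/SF_cat. exists w1, (w3 ++ w4). split => //. split => //.
exists w3, w4. split => //. split => //. apply: (@rules_sound X rhs _ w3 Hr). exact Hin.
Qed.

Lemma derives_trans s1 s2 s3 : derives G s1 s2 -> derives G s2 s3 -> derives G s1 s3.
Proof.
elim=> [s|a b c Hst _ IH] H //. apply: derives_step Hst _. exact: IH.
Qed.

Lemma derives_ctx u v s s' : derives G s s' -> derives G (u ++ s ++ v) (u ++ s' ++ v).
Proof.
elim=> [x|a b c [u0 [v0 [X [rhs [Hin [-> ->]]]]]] _ IH]; first exact: derives_refl.
apply: derives_step IH. exists (u ++ u0), (v0 ++ v), X, rhs. split => //.
split; by catn.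
Qed.

Lemma derives_cat s1 s1' s2 s2' : derives G s1 s1' -> derives G s2 s2' ->
  derives G (s1 ++ s2) (s1' ++ s2').
Proof.
move=> H1 H2. apply: (@derives_trans _ (s1' ++ s2)).
- have := @derives_ctx [::] s2 _ _ H1. by [].
- have := @derives_ctx s1' [::] _ _ H2. by rewrite !cats0.
Qed.

Lemma derives_rule X rhs : (X, rhs) \in rules -> derives G [:: inl X] rhs.
Proof.
move=> Hin. apply: derives_step (derives_refl _ _). exists [::], [::], X, rhs.
by rewrite cats0.
Qed.

Lemma d_t t s s' : derives G s s' -> derives G (inr t :: s) (inr t :: s').
Proof. exact: (@derives_cat [:: inr t] [:: inr t] s s' (derives_refl _ _)). Qed.

Lemma d_n X w s s' : derives G [:: inl X] w -> derives G s s' -> derives G (inl X :: s) (w ++ s').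
Proof. exact: (@derives_cat [:: inl X] w s s'). Qed.

Definition mW (w : seq 'I_3) : seq sym := map inr (map Some w).

Lemma mW_cat u v : mW (u ++ v) = mW u ++ mW v.
Proof. by rewrite /mW !map_cat. Qed.
Lemma mW_cons x u : mW (x :: u) = tl x :: mW u.
Proof. by []. Qed.

Lemma EN_der : (forall t, Ew t -> derives G [:: nt nE] (mW t)) /\
  (forall t, Nw t -> derives G [:: nt nN] (mW t)).
Proof.
apply: EN_mut.
- exact: (@derives_rule nE [::]).
- move=> u v _ Hu _ Hv. apply: derives_trans (@derives_rule nE [:: nt nE; nt nE] _) _ => //.
  rewrite mW_cat. exact: d_n.
- move=> u v _ Hu _ Hv. apply: derives_trans (@derives_rule nE [:: tA; nt nE; nt nN; tC] _) _ => //.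
  rewrite mW_cons !mW_cat. apply: d_t. apply: d_n => //. apply: d_n => //. exact: derives_refl.
- move=> e1 e2 e3 e4 _ H1 _ H2 _ H3 _ H4.
  apply: derives_trans (@derives_rule nN [:: tB; nt nE; tC; nt nE; tA; nt nE; tB; nt nE] _) _ => //.
  rewrite !(mW_cons, mW_cat). apply: d_t. apply: d_n => //. apply: d_t. apply: d_n => //.
  apply: d_t. apply: d_n => //. apply: d_t. rewrite -[mW e4]cats0. apply: d_n => //. exact: derives_refl.
- move=> e1 n e2 _ H1 _ H2 _ H3.
  apply: derives_trans (@derives_rule nN [:: tB; nt nE; nt nN; tB; nt nE] _) _ => //.
  rewrite !(mW_cons, mW_cat). apply: d_t. apply: d_n => //. apply: d_n => //.
  apply: d_t. rewrite -[mW e2]cats0. apply: d_n => //. exact: derives_refl.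
Qed.

Lemma FM_der : (forall t, Ew t -> derives G [:: nt nF] (mW (rev t))) /\
  (forall t, Nw t -> derives G [:: nt nM] (mW (rev t))).
Proof.
apply: EN_mut.
- exact: (@derives_rule nF [::]).
- move=> u v _ Hu _ Hv. apply: derives_trans (@derives_rule nF [:: nt nF; nt nF] _) _ => //.
  rewrite rev_cat mW_cat. exact: d_n.
- move=> u v _ Hu _ Hv. apply: derives_trans (@derives_rule nF [:: tC; nt nM; nt nF; tA] _) _ => //.
  have -> : rev (la :: u ++ v ++ [:: lc]) = lc :: rev v ++ rev u ++ [:: la] by norm.
  rewrite mW_cons !mW_cat. apply: d_t. apply: d_n => //. apply: d_n => //. exact: derives_refl.
- move=> e1 e2 e3 e4 _ H1 _ H2 _ H3 _ H4.
  apply: derives_trans (@derives_rule nM [:: nt nF; tB; nt nF; tA; nt nF; tC; nt nF; tB] _) _ => //.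
  have -> : rev (lb :: e1 ++ lc :: e2 ++ la :: e3 ++ lb :: e4) =
    rev e4 ++ lb :: rev e3 ++ la :: rev e2 ++ lc :: rev e1 ++ [:: lb] by norm.
  rewrite !(mW_cons, mW_cat). apply: d_n => //. apply: d_t. apply: d_n => //. apply: d_t.
  apply: d_n => //. apply: d_t. apply: d_n => //. exact: derives_refl.
- move=> e1 n e2 _ H1 _ H2 _ H3.
  apply: derives_trans (@derives_rule nM [:: nt nF; tB; nt nM; nt nF; tB] _) _ => //.
  have -> : rev (lb :: e1 ++ n ++ lb :: e2) = rev e2 ++ lb :: rev n ++ rev e1 ++ [:: lb] by norm.
  rewrite !(mW_cons, mW_cat). apply: d_n => //. apply: d_t. apply: d_n => //. apply: d_n => //.
  exact: derives_refl.
Qed.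

Lemma ruleQ x : (nQ, [:: tl x; nt nS; tl x]) \in rules.
Proof. by case: x => [[|[|[|m]]] Hm]. Qed.

Lemma S_der wd u v : D u wd -> D v wd -> derives G [:: nt nS] (mW u ++ tH :: mW (rev v)).
Proof.
elim: wd u v => [|x wd IH] u v.
- move=> /D_nilP Hu /D_nilP Hv.
  apply: derives_trans (@derives_rule nS [:: nt nE; nt nQ; nt nF] _) _ => //.
  apply: d_n; first exact: EN_der.1.
  change (tH :: mW (rev v)) with ([:: tH] ++ mW (rev v)). apply: d_n; first exact: (@derives_rule nQ [:: tH]).
  rewrite -[mW (rev v)]cats0. apply: d_n; first exact: FM_der.1. exact: derives_refl.
- move=> /D_consP [t [u' [Ht [Hu' ->]]]] /D_consP [s [v' [Hs [Hv' ->]]]].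
  apply: derives_trans (@derives_rule nS [:: nt nE; nt nQ; nt nF] _) _ => //.
  have -> : mW (t ++ x :: u') ++ tH :: mW (rev (s ++ x :: v')) =
    mW t ++ (tl x :: (mW u' ++ tH :: mW (rev v')) ++ [:: tl x]) ++ mW (rev s) ++ [::].
    rewrite /mW. by norm.
  apply: d_n; first exact: EN_der.1.
  apply: d_n.
    apply: derives_trans (@derives_rule _ _ (ruleQ x)) _. apply: d_t.
    apply: d_n; first exact: IH. exact: derives_refl.
  apply: d_n; first exact: FM_der.1. exact: derives_refl.
Qed.

Lemma cfg_SL w : cfg_lang G w <-> SL w.
Proof.
split.
- move=> H. have := @derives_sound _ _ H _ (SF_map w). move=> /= [w1 [w2 [-> [H1 ->]]]].
  by rewrite cats0.
- move=> [u [v [wd [Hu [Hv ->]]]]]. rewrite /cfg_lang.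
  have -> : map inr (map Some u ++ None :: map Some (rev v)) = mW u ++ tH :: mW (rev v).
    by rewrite /mW map_cat.
  exact: (@S_der wd u v Hu Hv).
Qed.

Lemma part1 : context_free (word_problem Pi2_rel).
Proof.
exists G => w. rewrite wp_SL. by rewrite cfg_SL.
Qed.



Definition Inv st0 q := exists q1 q2 k, q = q1 ++ q2 /\ k <= size st0 /\
  nfs st0 q = rev q2 ++ drop k st0 /\ C (rev (take k st0) ++ q1) [::].

Lemma Inv_step st0 e' q l rest : irr st0 -> st0 = rev e' -> e' = (q ++ [:: l]) ++ rest ->
  Inv st0 q -> Inv st0 (q ++ [:: l]).
Proof.
move=> Hirr Hst He [q1 [q2 [k [Hq [Hk [Hn Hc]]]]]].
have Hn' : nfs st0 (q ++ [:: l]) = step (rev q2 ++ drop k st0) l by rewrite nfs_cat Hn.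
rewrite /step in Hn'.
case E: (red (l :: rev q2 ++ drop k st0)) Hn' => [s|] Hn'; last first.
  exists q1, (q2 ++ [:: l]), k. split; first by rewrite Hq catA.
  split => //. split => //. by rewrite Hn' rev_cat.
move/redP: E => [i [Hi EX]].
have [R HR] : {R | R = rxw i ++ rxw i} by eexists. rewrite catA -HR in EX.
have Hlt : size (l :: rev q2) < size R.
  rewrite ltnNge. apply/negP => Hle.
  have E1 : l :: rev q2 = R ++ drop (size R) (l :: rev q2).
    have := congr1 (take (size R)) EX. rewrite -cat_cons takel_cat // take_size_cat // => {1}<-.
    by rewrite cat_take_drop.
  have Hr : red (l :: rev q2) = Some (drop (size R) (l :: rev q2)).
    by rewrite {1}E1 HR -catA red_rxw.
  have := @red_cat _ _ (rev q1) Hr.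
  have -> : (l :: rev q2) ++ rev q1 = drop (size rest) st0.
    by rewrite Hst He rev_cat drop_size_cat ?size_rev // Hq rev_cat /= rev_cat.
  by rewrite Hirr.
set j := size R - size (l :: rev q2).
have ER : R = (l :: rev q2) ++ take j (drop k st0).
  have := congr1 (take (size R)) EX. rewrite -cat_cons take_cat ltnNge (ltnW Hlt) /=.
  by rewrite take_size_cat.
have Es : s = drop (j + k) st0.
  have := congr1 (drop (size R)) EX. rewrite -cat_cons drop_cat ltnNge (ltnW Hlt) /=.
  by rewrite drop_size_cat // drop_drop => ->.
have Hj : j + k <= size st0.
  have := congr1 size EX. rewrite /= !size_cat size_rev size_drop /= => Hs.
  move: Hlt Hk. rewrite /j /= size_rev. lia.
exists (q1 ++ q2 ++ [:: l]), [::], (j + k). split; first by rewrite Hq cats0 catA.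
split => //. split; first by rewrite Hn' Es.
rewrite addnC takeD rev_cat -catA (catA (rev (take k st0)) q1) Hc /=.
have <- : rev R = rev (take j (drop k st0)) ++ q2 ++ [:: l].
  by rewrite ER rev_cat /= rev_cons revK cats1.
rewrite HR rev_cat !rev_rxw. exact: rel_C.
Qed.

Lemma Inv_all st0 e' : irr st0 -> st0 = rev e' -> forall rest q, e' = q ++ rest ->
  Inv st0 q -> Inv st0 e'.
Proof.
move=> Hirr Hst. elim=> [|l rest IH] q He Hq; first by rewrite He cats0.
apply: (IH (q ++ [:: l])); first by rewrite He -catA.
apply: (@Inv_step _ _ _ _ rest Hirr Hst _ Hq). by rewrite He -catA.
Qed.

Lemma idem_fact e : C (e ++ e) e -> exists p z, C e (p ++ z) /\ C (z ++ p) [::].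
Proof.
move=> He. set st0 := nfs [::] e. set e' := rev st0.
have Hirr : irr st0 by apply: irr_nfs irr_nil.
have Hst : st0 = rev e' by rewrite /e' revK.
have Hee : C e e' := C_nf e.
have Hfix : nfs st0 e' = st0.
  have H1 : nfs [::] e' = st0 by rewrite -(@nfs_cong _ _ Hee).
  rewrite -{1}H1 -nfs_cat. rewrite -H1. apply: nfs_cong.
  rewrite -Hee. exact: He.
have [q1 [q2 [k [Hq [Hk [Hn Hc]]]]]] : Inv st0 e'.
  apply: (@Inv_all st0 e' Hirr Hst e' [::]) => //.
  exists [::], [::], 0. split => //. split => //. split; first by rewrite /= drop0.
  rewrite take0 /=. reflexivity.
have Hk2 : k = size q2.
  have := congr1 size Hn. rewrite Hfix size_cat size_rev size_drop. lia.
have Ht : take k st0 = rev q2 by rewrite Hst Hq rev_cat Hk2 take_size_cat ?size_rev.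
exists q1, q2. split; first by rewrite -Hq.
by rewrite Ht revK in Hc.
Qed.



Definition tau (k n : nat) := if k == 0 then n else if n == 0 then k else if n == k then 0 else n.

Definition astep (x : nat * seq nat) (l : 'I_3) : nat * seq nat :=
  let: (n, s) := x in
  if l == la then (n, 0 :: s)
  else if l == lb then (n, if s is k :: s' then k.+1 :: s' else [::])
  else (if s is k :: s' then (tau k n, s') else (n, [::])).

Definition act x (w : seq 'I_3) := foldl astep x w.

Lemma act_cat x u v : act x (u ++ v) = act (act x u) v.
Proof. exact: foldl_cat. Qed.

Lemma act_cons x l w : act x (l :: w) = act (astep x l) w.
Proof. by []. Qed.

Lemma act_b i n k s : act (n, k :: s) (nseq i lb) = (n, (k + i) :: s).
Proof. elim: i k => [|i IH] k /=; first by rewrite addn0. by rewrite IH addnS. Qed.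

Lemma act_xw i n s : act (n, s) (xw i) = (tau i n, s).
Proof. by rewrite /xw -cat_cons act_cat /= act_b. Qed.

Lemma tau_inv i n : 0 < i -> tau i (tau i n) = n.
Proof.
rewrite /tau. case: i => // i _ /=.
case: n => [|n] /=; first by rewrite eqxx.
case: (n =P i) => [->|Hni] /=; first by rewrite eqxx.
have H : (n.+1 == i.+1) = false by apply/eqP; lia.
by rewrite H H.
Qed.

Lemma act_cong u v : C u v -> forall x, act x u = act x v.
Proof.
elim=> [u' v' l r [i [Hi [-> ->]]]|w|w1 w2 _ IH|w1 w2 w3 _ IH1 _ IH2] x //.
- rewrite -/(xw i) !act_cat. case: (act x u') => n s. by rewrite !act_xw tau_inv.
- by rewrite IH1.
Qed.

Definition hstep (l : 'I_3) (h : nat) := if l == la then h.+1 else if l == lb then h else h.-1.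

Lemma astep_size n s l : size (astep (n, s) l).2 = hstep l (size s).
Proof.
rewrite /astep /hstep. case: (l == la) => //. case: (l == lb); by case: s.
Qed.

Lemma act_height w n n' s s' : size s <= size s' -> size (act (n, s) w).2 <= size (act (n', s') w).2.
Proof.
elim: w n n' s s' => [|l w IH] n n' s s' H //. rewrite !act_cons.
case E1: (astep (n, s) l) => [n1 s1]. case E2: (astep (n', s') l) => [n2 s2].
apply: IH. have := astep_size n s l. have := astep_size n' s' l. rewrite E1 E2 /= => -> ->.
rewrite /hstep. case: (l == la) => //. case: (l == lb) => //. by rewrite -!subn1 leq_sub2r.
Qed.

Lemma unit_empty u v n : C (v ++ u) [::] -> (act (n, [::]) u).2 = [::].
Proof.
move=> H. case E: (act (n, [::]) v) => [m t].
have H2 : act (m, t) u = (n, [::]) by rewrite -E -act_cat (@act_cong _ _ H).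
have := @act_height u n m [::] t (leq0n _). rewrite H2 /=. rewrite leqn0 size_eq0. by move/eqP.
Qed.

Lemma astep_bound K n s l : all (fun k => k <= K) s ->
  let y := astep (n, s) l in all (fun k => k <= K.+1) y.2 /\
    (K.+1 < n -> y.1 = n) /\ (n <= K.+1 -> y.1 <= K.+1).
Proof.
move=> Hs. have Hs' : all (fun k => k <= K.+1) s.
  apply: sub_all Hs => k /= Hk. exact: leqW.
rewrite /astep. case: (l == la) => /=; first by rewrite Hs'.
case: (l == lb) => /=.
  case: s Hs Hs' => [|k s] //= /andP[Hk Hs] /andP[_ Hs']. by rewrite ltnS Hk Hs'.
case: s Hs Hs' => [|k s] //= /andP[Hk Hs] /andP[_ Hs']. split => //.
rewrite /tau. split.
- move=> Hn. case: (k == 0) => //. have -> : (n == 0) = false by apply/eqP; lia.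
  have -> : (n == k) = false by apply/eqP; lia. by [].
- move=> Hn. case: (k == 0) => //. case: (n == 0) => //; first exact: leqW.
  by case: (n == k).
Qed.

Lemma act_bound w K n s : all (fun k => k <= K) s ->
  let y := act (n, s) w in all (fun k => k <= K + size w) y.2 /\
    (K + size w < n -> y.1 = n) /\ (n <= K + size w -> y.1 <= K + size w).
Proof.
elim: w K n s => [|l w IH] K n s Hs; first by rewrite /= addn0.
rewrite act_cons.
have [H1 [H2 H3]] := @astep_bound K n s l Hs.
case E: (astep (n, s) l) H1 H2 H3 => [n1 s1] /= H1 H2 H3.
have [J1 [J2 J3]] := IH K.+1 n1 s1 H1.
rewrite addnS -addSn. split => //. split.
- move=> Hn. rewrite J2; first apply: H2; lia.
- move=> Hn. case: (leqP n1 (K.+1 + size w)) => Hn1; first exact: J3.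
  rewrite J2 //. have := H3 ltac:(lia). lia.
Qed.

Lemma fix1 u v n : C (v ++ u) [::] -> size u < n -> act (n, [::]) u = (n, [::]).
Proof.
move=> H Hn. have [_ [J2 _]] := @act_bound u 0 n [::] isT.
have E2 := @unit_empty u v n H. rewrite [act (n, [::]) u]surjective_pairing E2 J2 //.
Qed.

Lemma fix2 u v n : C (u ++ v) [::] -> C (v ++ u) [::] -> size v < n -> act (n, [::]) u = (n, [::]).
Proof.
move=> Huv Hvu Hn. have E2 := @unit_empty u v n Hvu.
case E: (act (n, [::]) u) E2 => [m t] /= Ht. subst t.
have H3 : act (m, [::]) v = (n, [::]) by rewrite -E -act_cat (@act_cong _ _ Huv).
have [_ [J2 J3]] := @act_bound v 0 m [::] isT.
rewrite H3 /= in J2 J3.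
case: (leqP m (size v)) => Hm.
- have := J3 Hm. lia.
- by rewrite J2.
Qed.

Lemma eMe_l e w : C (e ++ e) e -> in_eMe Pi2_rel e w -> forall r, C (e ++ w ++ r) (w ++ r).
Proof. move=> He [y Hy] r. rewrite Hy !catA He. reflexivity. Qed.

Lemma eMe_r e w : C (e ++ e) e -> in_eMe Pi2_rel e w -> forall r, C (w ++ e ++ r) (w ++ r).
Proof. move=> He [y Hy] r. rewrite Hy. catn. rewrite (catA e e r) He. reflexivity. Qed.

Lemma inv_units e p z g w : C (e ++ e) e -> C e (p ++ z) -> C (z ++ p) [::] ->
  in_eMe Pi2_rel e w -> C (g ++ w) e -> C ((z ++ g ++ p) ++ (z ++ w ++ p)) [::].
Proof.
move=> He Hez Hzp Hw Hgw. catn.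
have pz : C (p ++ z ++ w ++ p) (e ++ w ++ p) by rewrite catA -Hez; reflexivity.
rewrite pz (@eMe_l _ _ He Hw) (catA g w p) Hgw Hez. catn. rewrite (catA z p) Hzp. reflexivity.
Qed.

Lemma flat_C e p z ws : C (e ++ e) e -> C e (p ++ z) -> C (z ++ p) [::] ->
  (forall w, List.In w ws -> in_eMe Pi2_rel e w) ->
  C (z ++ e ++ flatten ws ++ p) (flatten [seq z ++ w ++ p | w <- ws]).
Proof.
move=> He Hez Hzp. elim: ws => [|w ws IH] Hw /=.
  rewrite Hez. catn. rewrite (catA z p) Hzp. reflexivity.
have IH' := IH (fun w' H => Hw w' (or_intror H)).
have Hwe := Hw w (or_introl erefl).
rewrite -IH'. catn.
have pz : forall r, C (p ++ z ++ r) (e ++ r) by move=> r; rewrite catA -Hez; reflexivity.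
have ee : forall r, C (e ++ e ++ r) (e ++ r) by move=> r; rewrite catA He; reflexivity.
rewrite (@eMe_l _ _ He Hwe) pz ee (@eMe_r _ _ He Hwe). reflexivity.
Qed.

Lemma act_flat (f : seq 'I_3 -> seq 'I_3) ws n :
  (forall w, List.In w ws -> act (n, [::]) (f w) = (n, [::])) ->
  act (n, [::]) (flatten (map f ws)) = (n, [::]).
Proof.
elim: ws => [|w ws IH] Hw //=. rewrite act_cat Hw; last by left.
apply: IH => w' H. apply: Hw. by right.
Qed.

Lemma sumn_le (A : Type) (f : A -> nat) gs g : List.In g gs -> f g <= sumn (map f gs).
Proof.
elim: gs => //= h gs IH [->|Hg]; first exact: leq_addr.
exact: leq_trans (IH Hg) (leq_addl _ _).
Qed.

Lemma part2 e : is_idempotent Pi2_rel e -> ~ maxsub_fg Pi2_rel e.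
Proof.
move=> He [gs [Hgs Hgen]].
have [p [z [Hez Hzp]]] := @idem_fact _ He.
set K := sumn [seq size (z ++ g ++ p) | g <- gs].
have HK : forall g, List.In g gs -> size (z ++ g ++ p) <= K.
  move=> g Hg. exact: (@sumn_le _ (fun g => size (z ++ g ++ p)) gs g Hg).
set N := K.+1.
have HX : C (xw N ++ xw N) [::] := @rel_C N (ltn0Sn K).
have HXa : act (N, [::]) (xw N) = (0, [::]) by rewrite act_xw /tau /N /= eqxx.
move: (xw N) HX HXa => X HX HXa.
set x := p ++ X ++ z.
have zp : forall r, C (z ++ p ++ r) r by move=> r; rewrite catA Hzp; reflexivity.
have Hxe : in_eMe Pi2_rel e x.
  exists x. rewrite /x Hez. catn. rewrite zp zp. reflexivity.
have Hxx : C (x ++ x) e.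
  rewrite /x Hez. catn. rewrite zp (catA X X z) HX /=. reflexivity.
have Hx : in_maxsub Pi2_rel e x.
  split; first exact Hxe. exists x. split; first exact Hxe. split; exact Hxx.
have [ws [Hws Hxw]] := Hgen x Hx.
have Hclaim : forall w, List.In w ws -> in_eMe Pi2_rel e w /\
    forall n, K < n -> act (n, [::]) (z ++ w ++ p) = (n, [::]).
  move=> w /Hws [Hg|[g [Hg [Hwe [Hgw Hwg]]]]].
  - have [Hge [y [Hye [Hgy Hyg]]]] := Hgs w Hg. split => // n Hn.
    apply: (@fix1 _ (z ++ y ++ p)); first exact: (@inv_units _ _ _ _ _ He Hez Hzp Hge Hyg).
    exact: leq_ltn_trans (HK w Hg) Hn.
  - have [Hge _] := Hgs g Hg. split => // n Hn.
    apply: (@fix2 _ (z ++ g ++ p)).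
    + exact: (@inv_units _ _ _ _ _ He Hez Hzp Hge Hwg).
    + exact: (@inv_units _ _ _ _ _ He Hez Hzp Hwe Hgw).
    + exact: leq_ltn_trans (HK g Hg) Hn.
have A1 : act (N, [::]) (z ++ x ++ p) = (0, [::]).
  have H : C (z ++ x ++ p) X.
    rewrite /x. catn. rewrite zp Hzp cats0. reflexivity.
  by rewrite (@act_cong _ _ H).
have A2 : act (N, [::]) (z ++ x ++ p) = (N, [::]).
  have H : C (z ++ x ++ p) (flatten [seq z ++ w ++ p | w <- ws]).
    rewrite Hxw -(@flat_C _ _ _ _ He Hez Hzp); first (catn; reflexivity).
    move=> w Hw. exact: (Hclaim w Hw).1.
  rewrite (@act_cong _ _ H). apply: act_flat => w Hw. exact: (Hclaim w Hw).2.
by rewrite A1 in A2.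
Qed.


Theorem mainTheorem11 :
  context_free (word_problem Pi2_rel) /\
  (forall e : seq 'I_3, is_idempotent Pi2_rel e -> ~ maxsub_fg Pi2_rel e).
Proof.
split; first exact: part1.
move=> e He. exact: part2.
Qed.
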